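(* Let $(X_1,\dots,X_n)$, $2\le n\le\infty$, be a random vector or sequence such that for each $l=2,\dots,n$ the vector $(X_1,\dots,X_l)$ is RE$(l)$. Then $(X_1,\dots,X_n)$ is SIAMX* and SIAMN*. Moreover, it is SSIAMX* if $\Pr[X_l>\max(|X_1|,\dots,|X_{l-1}|)]>0$ for $l=3,\dots,n$, and it is SSIAMN* if $\Pr[X_l<-\max(|X_1|,\dots,|X_{l-1}|)]>0$ for $l=3,\dots,n$.
   Context: A random vector $(Y_1,\dots,Y_l)$ is RE$(k,l)$ for $1\le k<l$ if its distribution is unchanged when $(Y_k,Y_l)$ is replaced by $(-Y_l,-Y_k)$ (other coordinates fixed); it is RE$(l)$ if it is RE$(k,l)$ for some $k<l$. For random variables $U,V$, $U\le_{\mathrm{st}}V$ means $F_U(x)\ge F_V(x)$ for all $x$ ($F$ the cdf), and $U<_{\mathrm{st}}V$ means additionally strict inequality for at least one $x$. $(X_1,\dots,X_n)$ is SIAMX* if $|X_1|\overset{d}{=}|\max(X_1,X_2)|$ and $|\max(X_1,\dots,X_{l-1})|\le_{\mathrm{st}}|\max(X_1,\dots,X_l)|$ for $l=3,\dots,n$; SSIAMX* if moreover these last inequalities are strict ($<_{\mathrm{st}}$). SIAMN* and SSIAMN* are defined the same way with $\max$ replaced by $\min$ (including $|X_1|\overset{d}{=}|\min(X_1,X_2)|$). *)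

(* Defs.v *)
From HB Require Import structures.
From mathcomp Require Import all_boot all_order all_algebra.
From mathcomp Require Import all_classical all_reals all_analysis.
Set Implicit Arguments. Unset Strict Implicit. Unset Printing Implicit Defensive.
Import Order.TTheory GRing.Theory Num.Theory.
Local Open Scope classical_set_scope.
Local Open Scope ring_scope.

(* Length n of the vector/sequence: [Some m] = finite length m, [None] = infinite. *)
Definition idx_le (l : nat) (n : option nat) : Prop :=
  if n is Some m then (l <= m)%N else True.

Section defs.
Context {d : measure_display} {T : measurableType d} {R : realType}.
Variable P : probability T R.

(* the random vector (Y_1,...,Y_l) (coordinates indexed from 1) *)
Definition rvec (Y : nat -> T -> R) (l : nat) (w : T) : l.-tuple R :=
  [tuple Y i.+1 w | i < l].

Definition reswap (Y : nat -> T -> R) (k l : nat) : nat -> T -> R :=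
  fun i w => if i == k then - Y l w else if i == l then - Y k w else Y i w.

Definition same_law {l : nat} (U V : T -> l.-tuple R) : Prop :=
  forall A : set (l.-tuple R), measurable A -> P (U @^-1` A) = P (V @^-1` A).

Definition RE_kl (Y : nat -> T -> R) (k l : nat) : Prop :=
  same_law (rvec Y l) (rvec (reswap Y k l) l).

Definition RE_l (Y : nat -> T -> R) (l : nat) : Prop :=
  exists k, (1 <= k < l)%N /\ RE_kl Y k l.

Definition eq_dist (U V : T -> R) : Prop :=
  forall A : set R, measurable A -> P (U @^-1` A) = P (V @^-1` A).

Definition cdfP (U : T -> R) (x : R) : \bar R := P [set w | U w <= x].

Definition st_le (U V : T -> R) : Prop :=
  forall x : R, (cdfP V x <= cdfP U x)%E.

Definition st_lt (U V : T -> R) : Prop :=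
  st_le U V /\ exists x : R, (cdfP V x < cdfP U x)%E.

End defs.

(* max(X_1,...,X_l) and min(X_1,...,X_l), for l >= 1 (value at l = 0 is X_1, unused) *)
Fixpoint maxX {T : Type} {R : realType} (X : nat -> T -> R) (l : nat) (w : T) : R :=
  match l with
  | 0 | 1 => X 1%N w
  | l'.+1 => Num.max (maxX X l' w) (X l'.+1 w)
  end.

Fixpoint minX {T : Type} {R : realType} (X : nat -> T -> R) (l : nat) (w : T) : R :=
  match l with
  | 0 | 1 => X 1%N w
  | l'.+1 => Num.min (minX X l' w) (X l'.+1 w)
  end.

Definition maxabsX {T : Type} {R : realType} (X : nat -> T -> R) (l : nat) (w : T) : R :=
  maxX (fun i w => `|X i w|) l w.

Section props.
Context {d : measure_display} {T : measurableType d} {R : realType}.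
Variable P : probability T R.

Definition SIAMX (X : nat -> T -> R) (n : option nat) : Prop :=
  eq_dist P (fun w => `|X 1%N w|) (fun w => `|maxX X 2 w|) /\
  forall l, (3 <= l)%N -> idx_le l n ->
    st_le P (fun w => `|maxX X l.-1 w|) (fun w => `|maxX X l w|).

Definition SSIAMX (X : nat -> T -> R) (n : option nat) : Prop :=
  eq_dist P (fun w => `|X 1%N w|) (fun w => `|maxX X 2 w|) /\
  forall l, (3 <= l)%N -> idx_le l n ->
    st_lt P (fun w => `|maxX X l.-1 w|) (fun w => `|maxX X l w|).

Definition SIAMN (X : nat -> T -> R) (n : option nat) : Prop :=
  eq_dist P (fun w => `|X 1%N w|) (fun w => `|minX X 2 w|) /\
  forall l, (3 <= l)%N -> idx_le l n ->
    st_le P (fun w => `|minX X l.-1 w|) (fun w => `|minX X l w|).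

Definition SSIAMN (X : nat -> T -> R) (n : option nat) : Prop :=
  eq_dist P (fun w => `|X 1%N w|) (fun w => `|minX X 2 w|) /\
  forall l, (3 <= l)%N -> idx_le l n ->
    st_lt P (fun w => `|minX X l.-1 w|) (fun w => `|minX X l w|).

End props.

(* Main.v *)
Require Import Defs.
From HB Require Import structures.
From mathcomp Require Import all_boot all_order all_algebra.
From mathcomp Require Import all_classical all_reals all_analysis.
From mathcomp Require Import measurable_realfun.
From mathcomp.algebra_tactics Require Import lra.
From mathcomp Require Import zify.
Import Order.TTheory GRing.Theory Num.Theory.
Local Open Scope classical_set_scope.
Local Open Scope ring_scope.


Lemma maxXS {T : Type} {R : realType} (F : nat -> T -> R) j w :
  (0 < j)%N -> maxX F j.+1 w = Num.max (maxX F j w) (F j.+1 w).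
Proof. by case: j. Qed.

Section gen.
Context {T : Type} {R : realType}.
Implicit Types (F G : nat -> T -> R).

Lemma minXS F j w : (0 < j)%N -> minX F j.+1 w = Num.min (minX F j w) (F j.+1 w).
Proof. by case: j. Qed.

Lemma maxX_ext {T'} F (G : nat -> T' -> R) j w v : (0 < j)%N ->
  (forall i, (1 <= i <= j)%N -> F i w = G i v) -> maxX F j w = maxX G j v.
Proof.
elim: j => [//|[|j] IH] _ H; first by apply: H.
rewrite (maxXS F) // (maxXS G) // IH // ?H //; first by rewrite ltnSn.
by move=> i /andP[i1 ij]; apply: H; rewrite i1 (leq_trans ij).
Qed.

Lemma maxX_le F j w c : (0 < j)%N ->
  (maxX F j w <= c) <-> (forall i, (1 <= i <= j)%N -> F i w <= c).
Proof.
elim: j => [//|[|j] IH] _.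
  split; first by move=> H i; rewrite -eqn_leq => /eqP <-.
  by move=> H; apply: H.
have {}IH := IH isT.
rewrite maxXS // ge_max; split.
  move=> /andP[/IH H1 H2] i /andP[i1]; rewrite leq_eqVlt => /orP[/eqP->//|ij].
  by apply: H1; rewrite i1.
move=> H; apply/andP; split; last by apply: (H j.+2); rewrite /= ltnSn.
by apply/IH => i /andP[i1 ij]; apply: H; rewrite i1 (leq_trans ij).
Qed.

Lemma maxX_lt F j w c : (0 < j)%N ->
  (maxX F j w < c) <-> (forall i, (1 <= i <= j)%N -> F i w < c).
Proof.
elim: j => [//|[|j] IH] _.
  split; first by move=> H i; rewrite -eqn_leq => /eqP <-.
  by move=> H; apply: H.
have {}IH := IH isT.
rewrite maxXS // gt_max; split.
  move=> /andP[/IH H1 H2] i /andP[i1]; rewrite leq_eqVlt => /orP[/eqP->//|ij].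
  by apply: H1; rewrite i1.
move=> H; apply/andP; split; last by apply: (H j.+2); rewrite /= ltnSn.
by apply/IH => i /andP[i1 ij]; apply: H; rewrite i1 (leq_trans ij).
Qed.

Lemma maxX_ge F j w i : (1 <= i <= j)%N -> F i w <= maxX F j w.
Proof.
move=> /andP[i1 ij]; have j0 : (0 < j)%N by apply: leq_trans ij.
by move: (le_refl (maxX F j w)) => /(maxX_le _ _ _ _ j0); apply; rewrite i1.
Qed.

Lemma minX_opp F j w : (0 < j)%N -> minX F j w = - maxX (fun i w => - F i w) j w.
Proof.
elim: j => [//|[|j] IH] _; first by rewrite /= opprK.
by rewrite minXS // maxXS // IH // oppr_max !opprK.
Qed.

End gen.



Section mgen.
Context {d' : measure_display} {U : measurableType d'} {R : realType}.

Lemma mpre {d2} {V : measurableType d2} (f : U -> V) A :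
  measurable_fun setT f -> measurable A -> measurable (f @^-1` A).
Proof. by move=> mf mA; rewrite -[_ @^-1` _]setTI; exact: mf. Qed.

Lemma mlt (f g : U -> R) : measurable_fun setT f -> measurable_fun setT g ->
  measurable [set x | f x < g x].
Proof.
move=> mf mg.
have -> : [set x | f x < g x] = (fun x => f x < g x) @^-1` [set true].
  by apply/seteqP; split=> x /=.
by apply: mpre; [exact: measurable_fun_ltr|].
Qed.

Lemma mle (f g : U -> R) : measurable_fun setT f -> measurable_fun setT g ->
  measurable [set x | f x <= g x].
Proof.
move=> mf mg.
have -> : [set x | f x <= g x] = (fun x => f x <= g x) @^-1` [set true].
  by apply/seteqP; split=> x /=.
by apply: mpre; [exact: measurable_fun_ler|].
Qed.

Lemma mmaxX (F : nat -> U -> R) j : (0 < j)%N ->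
  (forall i, (1 <= i <= j)%N -> measurable_fun setT (F i)) ->
  measurable_fun setT (maxX F j).
Proof.
elim: j => [//|[|j] IH] _ H; first by apply: H.
have -> : maxX F j.+2 = (maxX F j.+1) \max (F j.+2).
  by apply/funext => w; rewrite maxXS.
apply: measurable_maxr; last by apply: H; rewrite /= ltnSn.
by apply: IH => // i /andP[i1 ij]; apply: H; rewrite i1 (leq_trans ij).
Qed.

End mgen.

Definition ct {R : realType} {l : nat} (i : nat) (t : l.-tuple R) : R := nth 0 t i.-1.

Lemma ct_meas {R : realType} {l : nat} i : measurable_fun setT (@ct R l i).
Proof.
case: (ltnP i.-1 l) => h.
  have -> : @ct R l i = (@tnth l R ^~ (Ordinal h)).
    by apply/funext => t; rewrite (tnth_nth 0).
  exact: measurable_tnth.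
have -> : @ct R l i = cst 0.
  by apply/funext => t; rewrite /ct nth_default // size_tuple.
exact: measurable_cst.
Qed.

Section rv.
Context {d : measure_display} {T : measurableType d} {R : realType}.

Lemma ct_rvec (Y : nat -> T -> R) l w i : (1 <= i <= l)%N -> ct i (rvec Y l w) = Y i w.
Proof.
case: i => [//|i] /andP[_ il].
have := tnth_mktuple (fun j : 'I_l => Y j.+1 w) (Ordinal il).
by rewrite (tnth_nth 0).
Qed.

Lemma maxX_rvec (Y : nat -> T -> R) l w j : (0 < j)%N -> (j <= l)%N ->
  maxX ct j (rvec Y l w) = maxX Y j w.
Proof.
move=> j0 jl; apply: maxX_ext => // i /andP[i1 ij].
by rewrite ct_rvec // i1 (leq_trans ij).
Qed.
End rv.

Lemma rvec_meas {d} {T : measurableType d} {R : realType} (Y : nat -> T -> R) l :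
  (forall i, (1 <= i <= l)%N -> measurable_fun setT (Y i)) ->
  measurable_fun setT (rvec Y l).
Proof.
move=> H; apply/measurable_fun_tnthP => j.
have -> : (@tnth l R ^~ j \o rvec Y l) = Y j.+1.
  by apply/funext => w /=; rewrite /rvec tnth_mktuple.
by apply: H; rewrite ltn_ord.
Qed.



Section core.
Context {d : measure_display} {T : measurableType d} {R : realType} (P : probability T R).

Lemma l2_eq (X : nat -> T -> R) : RE_kl P X 1 2 ->
  measurable_fun setT (X 1%N) -> measurable_fun setT (X 2%N) ->
  eq_dist P (fun w => `|X 1%N w|) (fun w => `|maxX X 2 w|).
Proof.
move=> RE m1 m2 A mA.
pose Ct := (fun t : 2.-tuple R => `|ct 2 t|) @^-1` A `&` [set t | ct 1 t < ct 2 t].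
have mCt : measurable Ct.
  apply: measurableI; first by apply: mpre => //; apply: measurableT_comp => //; exact: ct_meas.
  by apply: mlt; exact: ct_meas.
have E := RE Ct mCt.
have mZ : measurable_fun setT (rvec X 2).
  by apply: rvec_meas => -[|[|[|i]]].
have mZ' : measurable_fun setT (rvec (reswap X 1 2) 2).
  apply: rvec_meas => -[|[|[|i]]] // _; rewrite /reswap /=;
  by apply: measurable_funN.
pose E1 := (fun w => `|X 1%N w|) @^-1` A `&` [set w | X 2%N w <= X 1%N w].
have mE1 : measurable E1.
  apply: measurableI; first by apply: mpre => //; apply: measurableT_comp.
  exact: mle.
have eq1 : (fun w => `|X 1%N w|) @^-1` A = E1 `|` (rvec (reswap X 1 2) 2 @^-1` Ct).
  apply/seteqP; split => w /=.
    rewrite /E1 /Ct /= !ct_rvec //= /reswap /= normrN ltrN2.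
    by move=> Aw; case: (leP (X 2%N w) (X 1%N w)) => h; [left|right].
  rewrite /E1 /Ct /= !ct_rvec //= /reswap /= normrN.
  by case => -[].
have eq2 : (fun w => `|maxX X 2 w|) @^-1` A = E1 `|` (rvec X 2 @^-1` Ct).
  apply/seteqP; split => w /=.
    rewrite /E1 /Ct /= !ct_rvec //=.
    by case: (leP (X 2%N w) (X 1%N w)) => h; [left|right].
  rewrite /E1 /Ct /= !ct_rvec //=.
  by case: (leP (X 2%N w) (X 1%N w)) => h [[]|[]].
have d1 : E1 `&` (rvec (reswap X 1 2) 2 @^-1` Ct) = set0.
  apply/seteqP; split => w //=; rewrite /E1 /Ct /= !ct_rvec //= /reswap /= ltrN2.
  by move=> [[_ h1] [_ h2]]; move: (lt_le_trans h2 h1); rewrite ltxx.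
have d2 : E1 `&` (rvec X 2 @^-1` Ct) = set0.
  apply/seteqP; split => w //=; rewrite /E1 /Ct /= !ct_rvec //=.
  by move=> [[_ h1] [_ h2]]; move: (lt_le_trans h2 h1); rewrite ltxx.
rewrite eq1 eq2 !measureU //.
- by congr (_ + _); symmetry; exact: E.
- by rewrite -[_ @^-1` _]setTI; exact: mZ.
- by rewrite -[_ @^-1` _]setTI; exact: mZ'.
Qed.

Arguments maxX : simpl never.
Lemma rs_k (X : nat -> T -> R) k l w : reswap X k l k w = - X l w.
Proof. by rewrite /reswap eqxx. Qed.
Lemma rs_l (X : nat -> T -> R) k l w : k != l -> reswap X k l l w = - X k w.
Proof. by rewrite /reswap eq_sym => /negbTE ->; rewrite eqxx. Qed.
Lemma rs_i (X : nat -> T -> R) k l i w : i != k -> i != l -> reswap X k l i w = X i w.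
Proof. by rewrite /reswap => /negbTE -> /negbTE ->. Qed.

Lemma core_le (X : nat -> T -> R) m k (x : R) :
  (2 <= m)%N -> (1 <= k <= m)%N -> RE_kl P X k m.+1 ->
  (forall i, (1 <= i <= m.+1)%N -> measurable_fun setT (X i)) ->
  (P [set w | `|maxX X m.+1 w| <= x]%R +
   P ([set w | maxabsX X m w <= x]%R `&` [set w | x < X m.+1 w]%R)
     <= P [set w | `|maxX X m w| <= x]%R)%E.
Proof.
move=> m2 /andP[k1 km] RE mX.
have m0 : (0 < m)%N by apply: leq_trans m2.
have kl : k != m.+1 by rewrite neq_ltn ltnS km.
pose Ct := [set t : m.+1.-tuple R | maxX ct m t < -x] `&` [set t | -x <= ct m.+1 t]
   `&` [set t | ct m.+1 t <= x].
have mCt : measurable Ct.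
  have mM : measurable_fun setT (maxX (@ct R m.+1) m).
    by apply: mmaxX => // i _; exact: ct_meas.
  apply: measurableI; first apply: measurableI.
  - by apply: mlt => //; exact: measurable_cst.
  - by apply: mle; [exact: measurable_cst|exact: ct_meas].
  - by apply: mle; [exact: ct_meas|exact: measurable_cst].
have E := RE Ct mCt.
have mZ : measurable_fun setT (rvec X m.+1) by apply: rvec_meas.
have mZ' : measurable_fun setT (rvec (reswap X k m.+1) m.+1).
  apply: rvec_meas => i il; rewrite /reswap.
  case: (eqVneq i k) => [ik|ik].
    by subst i; rewrite ?eqxx; apply: measurable_funN; apply: mX; rewrite ltnSn.
  rewrite ?(negbTE ik); case: (eqVneq i m.+1) => [il'|il'].
    by subst i; rewrite ?eqxx; apply: measurable_funN; apply: mX; rewrite k1 (leq_trans km).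
  by rewrite ?(negbTE il'); exact: mX.
have mXm : measurable_fun setT (maxX X m).
  by apply: mmaxX => // i /andP[i1 im]; apply: mX; rewrite i1 (leq_trans im).
have mXl : measurable_fun setT (maxX X m.+1).
  by apply: mmaxX.
have mXa : measurable_fun setT (maxabsX X m).
  apply: mmaxX => // i /andP[i1 im]; apply: measurableT_comp => //.
  by apply: mX; rewrite i1 (leq_trans im).
have mXL : measurable_fun setT (X m.+1) by apply: mX; rewrite ltnSn.
pose A := [set w | `|maxX X m.+1 w| <= x].
pose B := [set w | `|maxX X m w| <= x].
pose C := rvec X m.+1 @^-1` Ct.
pose Cs := rvec (reswap X k m.+1) m.+1 @^-1` Ct.
pose D := B `&` [set w | x < X m.+1 w].
pose F := [set w | maxabsX X m w <= x] `&` [set w | x < X m.+1 w].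
have mA : measurable A.
  by apply: mle; [apply: measurableT_comp|exact: measurable_cst].
have mB : measurable B.
  by apply: mle; [apply: measurableT_comp|exact: measurable_cst].
have mC : measurable C by rewrite /C -[_ @^-1` _]setTI; exact: mZ.
have mCs : measurable Cs by rewrite /Cs -[_ @^-1` _]setTI; exact: mZ'.
have mD : measurable D.
  by apply: measurableI => //; apply: mlt => //; exact: measurable_cst.
have mF : measurable F.
  by apply: measurableI; [apply: mle => //|apply: mlt => //]; exact: measurable_cst.
have PCs : P C = P Cs by exact: E.
have hA : A `<=` (A `&` B) `|` C.
  move=> w; rewrite /A /B /C /Ct /= maxXS // maxX_rvec ?leqnSn // ct_rvec ?leqnn //.
  rewrite !ler_norml ge_max le_max.
  case: (leP (-x) (maxX X m w)) => h /=.
    by move=> /[dup] H /andP[h1 _]; left.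
  by move=> /and3P[h0 h1 h2]; right.
have hCsD : Cs `<=` D.
  move=> w; rewrite /Cs /D /B /Ct /= maxX_rvec ?leqnSn // ct_rvec ?leqnn // rs_l // => -[[h1 h2] h3].
  have := (maxX_lt _ _ _ _ m0).1 h1 => H.
  have Hk := H k; rewrite k1 km rs_k in Hk; have {}Hk := Hk isT.
  split; last by lra.
  rewrite ler_norml; apply/andP; split.
    by have := maxX_ge X m w k; rewrite k1 km => /(_ isT); lra.
  apply/(maxX_le _ _ _ _ m0) => i /andP[i1 im].
  have [->|ik] := eqVneq i k; first by lra.
  have il : i != m.+1 by rewrite neq_ltn ltnS im.
  have := H i; rewrite i1 im rs_i // => /(_ isT); lra.
have hFD : F `<=` D.
  move=> w; rewrite /F /D /B /= => -[h1 h2]; split => //.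
  have := (maxX_le _ _ _ _ m0).1 h1 => H.
  rewrite ler_norml; apply/andP; split.
    have := maxX_ge X m w 1; rewrite m0 => /(_ isT).
    by have := H 1%N; rewrite m0 ler_norml => /(_ isT) /andP[]; lra.
  apply/(maxX_le _ _ _ _ m0) => i im.
  by have := H i im; rewrite ler_norml => /andP[].
have hCsF : Cs `&` F = set0.
  apply/seteqP; split => w //=; rewrite /Cs /F /Ct /= maxX_rvec ?leqnSn //.
  move=> [[[h1 _] _] [h2 _]].
  pose i0 := if k == 1%N then 2%N else 1%N.
  have i0k : i0 != k by rewrite /i0; case: (eqVneq k 1%N) => [->|h] //; rewrite eq_sym.
  have i0m : (1 <= i0 <= m)%N by rewrite /i0; case: ifP.
  have i0l : i0 != m.+1 by rewrite neq_ltn ltnS; case/andP: i0m => _ ->.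
  have := (maxX_lt _ _ _ _ m0).1 h1 i0 i0m; rewrite rs_i //.
  have := (maxX_le _ _ _ _ m0).1 h2 i0 i0m; rewrite ler_norml.
  lra.
have hB : B = (A `&` B) `|` D.
  apply/seteqP; split => w; last by move=> [[]|[]].
  rewrite /A /B /D /= => h; case: (leP (X m.+1 w) x) => h2; last by right.
  left; split => //; rewrite maxXS // ler_norml ge_max le_max h2 andbT.
  by move: h; rewrite ler_norml => /andP[-> ->].
have hABD : (A `&` B) `&` D = set0.
  apply/seteqP; split => w //=; rewrite /A /D /= maxXS // ler_norml ge_max.
  by move=> [[/andP[_ /andP[_ h]] _] [_ h']]; move: (lt_le_trans h' h); rewrite ltxx.
have le1 : (P A <= P (A `&` B) + P C)%E.
  apply: le_trans (measureU2 _ _ _); last exact: mC.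
  - apply: le_measure => //; rewrite ?inE //.
    by apply: measurableU; [exact: measurableI|exact: mC].
  - exact: measurableI.
have le2 : (P Cs + P F <= P D)%E.
  rewrite -(measureU P mCs mF hCsF).
  apply: le_measure; rewrite ?inE //; first by apply: measurableU.
  by move=> w [/hCsD|/hFD].
rewrite -/A -/B -/F hB (measureU P _ mD hABD); last exact: measurableI.
apply: le_trans (leeD2r _ le1) _.
rewrite -addeA; apply: leeD => //.
by rewrite PCs.
Qed.

End core.



Lemma idx_le_trans l i n : idx_le l n -> (i <= l)%N -> idx_le i n.
Proof. by case: n => //= m h il; apply: leq_trans h. Qed.

Section fin.
Context {d : measure_display} {T : measurableType d} {R : realType} (P : probability T R).

Lemma exists_pos (U V : T -> R) : measurable_fun setT U -> measurable_fun setT V ->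
  (0 < P [set w | U w < V w]%R)%E ->
  exists x, (0 < P ([set w | U w <= x]%R `&` [set w | x < V w]%R))%E.
Proof.
move=> mU mV pos; apply: contrapT => nex.
pose Fx x := [set w | U w <= x] `&` [set w | x < V w].
have mFx x : measurable (Fx x).
  by apply: measurableI; [apply: mle|apply: mlt] => //; exact: measurable_cst.
have H0 x : P (Fx x) = 0%E.
  apply/eqP; rewrite eq_le measure_ge0 andbT leNgt; apply/negP => h.
  by apply: nex; exists x.
pose q n : R := ratr (odflt 0%R (unpickle n : option rat)).
have sub : [set w | U w < V w] `<=` \bigcup_n Fx (q n).
  move=> w /= h; have [r] := rat_in_itvoo h; rewrite in_itv /= => /andP[h1 h2].
  by exists (pickle r) => //; rewrite /q pickleK /=; split => //; exact: ltW.
have := measure_sigma_subadditive P (fun n => mFx (q n)) (mlt _ _ mU mV) sub.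
rewrite eseries0; last by move=> i _ _; exact: H0.
by rewrite leNgt pos.
Qed.

Lemma max_part (X : nat -> T -> R) (n : option nat) :
  idx_le 2 n ->
  (forall i, (1 <= i)%N -> idx_le i n -> measurable_fun [set: T] (X i)) ->
  (forall l, (2 <= l)%N -> idx_le l n -> RE_l P X l) ->
  SIAMX P X n /\
  ((forall l, (3 <= l)%N -> idx_le l n ->
      (0 < P [set w | (maxabsX X l.-1 w < X l w)%R])%E) -> SSIAMX P X n).
Proof.
move=> n2 mX RE.
have eqd : eq_dist P (fun w => `|X 1%N w|) (fun w => `|maxX X 2 w|).
  have [k [kk REk]] := RE 2%N isT n2; case/andP: kk => k1 k2.
  have k1' : k = 1%N by apply/eqP; rewrite eqn_leq -ltnS k2 k1.
  subst k; apply: l2_eq => //; apply: mX => //; exact: idx_le_trans n2 _.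
have key : forall l x, (3 <= l)%N -> idx_le l n ->
  (P [set w | `|maxX X l w| <= x]%R +
   P ([set w | maxabsX X l.-1 w <= x]%R `&` [set w | x < X l w]%R)
     <= P [set w | `|maxX X l.-1 w| <= x]%R)%E.
  move=> l x l3 ln.
  have [k [kk REk]] := RE l (ltnW l3) ln; case/andP: kk => k1 kl.
  case: l l3 ln kl REk => [//|m] l3 ln kl REk /=.
  apply: (@core_le _ _ _ _ _ _ k) => //.
  - by rewrite k1 -ltnS.
  - move=> i /andP[i1 il]; apply: mX => //; exact: idx_le_trans ln _.
have mmax : forall j, (0 < j)%N -> idx_le j n -> measurable_fun setT (maxabsX X j).
  move=> j j0 jn; apply: mmaxX => // i /andP[i1 ij]; apply: measurableT_comp => //.
  by apply: mX => //; exact: idx_le_trans jn ij.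
split.
  split => // l l3 ln x.
  by apply: le_trans (key l x l3 ln); apply: leeDl; exact: measure_ge0.
move=> hpos; split => // l l3 ln; split.
  move=> x; by apply: le_trans (key l x l3 ln); apply: leeDl; exact: measure_ge0.
have l1 : (0 < l.-1)%N by lia.
have l1n : idx_le l.-1 n by apply: idx_le_trans ln (leq_pred _).
have [x hx] := exists_pos _ _ (mmax l.-1 l1 l1n) (mX l ltac:(lia) ln) (hpos l l3 ln).
exists x; apply: lt_le_trans (key l x l3 ln).
rewrite lteDl // fin_num_measure //; apply: mle; last exact: measurable_cst.
apply: measurableT_comp => //; apply: mmaxX; first by lia.
by move=> i /andP[i1 il]; apply: mX => //; exact: idx_le_trans ln il.
Qed.

Definition ng {l : nat} (t : l.-tuple R) : l.-tuple R := map_tuple (fun r => - r) t.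

Lemma ng_meas l : measurable_fun setT (@ng l).
Proof.
apply/measurable_fun_tnthP => i.
have -> : (@tnth l R ^~ i \o @ng l) = (fun t => - tnth t i).
  by apply/funext => t /=; rewrite tnth_map.
exact: measurable_funN (measurable_tnth i).
Qed.

Lemma RE_neg (X : nat -> T -> R) k l : RE_kl P X k l -> RE_kl P (fun i w => - X i w) k l.
Proof.
move=> H A mA.
have e1 : rvec (fun i w => - X i w) l = ng \o rvec X l.
  by apply/funext => w; apply: eq_from_tnth => i; rewrite tnth_mktuple /ng /comp tnth_map tnth_mktuple.
have e2 : rvec (reswap (fun i w => - X i w) k l) l = ng \o rvec (reswap X k l) l.
  apply/funext => w; apply: eq_from_tnth => i; rewrite tnth_mktuple /ng /comp tnth_map tnth_mktuple /reswap.
  by case: ifP => // _; case: ifP.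
rewrite e1 e2; exact: (H (ng @^-1` A) (mpre _ _ (ng_meas l) mA)).
Qed.

End fin.

Theorem theorem3p6 (d : measure_display) (T : measurableType d) (R : realType)
    (P : probability T R) (X : nat -> T -> R) (n : option nat) :
  idx_le 2 n ->
  (forall i, (1 <= i)%N -> idx_le i n -> measurable_fun [set: T] (X i)) ->
  (forall l, (2 <= l)%N -> idx_le l n -> RE_l P X l) ->
  [/\ SIAMX P X n, SIAMN P X n,
      ((forall l, (3 <= l)%N -> idx_le l n ->
          (0 < P [set w | (maxabsX X l.-1 w < X l w)%R])%E) -> SSIAMX P X n)
    & ((forall l, (3 <= l)%N -> idx_le l n ->
          (0 < P [set w | (X l w < - maxabsX X l.-1 w)%R])%E) -> SSIAMN P X n)].
Proof.
move=> n2 mX RE.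
pose X' := fun i w => - X i w.
have [SX SSX] := max_part P X n n2 mX RE.
have mX' : forall i, (1 <= i)%N -> idx_le i n -> measurable_fun [set: T] (X' i).
  by move=> i i1 iN; apply: measurable_funN; exact: mX.
have RE' : forall l, (2 <= l)%N -> idx_le l n -> RE_l P X' l.
  move=> l l2 ln; have [k [kk h]] := RE l l2 ln; exists k; split => //.
  exact: RE_neg.
have [SX' SSX'] := max_part P X' n n2 mX' RE'.
have mn : forall j, (0 < j)%N ->
    (fun w => `|minX X j w|) = (fun w => `|maxX X' j w|).
  by move=> j j0; apply/funext => w; rewrite minX_opp // normrN.
have e1 : (fun w => `|X' 1%N w|) = (fun w => `|X 1%N w|).
  by apply/funext => w; rewrite normrN.
split => //.
- case: SX' => h1 h2; split; first by rewrite (mn 2%N isT) -e1.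
  move=> l l3 ln; rewrite (mn l) ?(mn l.-1); [exact: h2| lia| lia].
- move=> hpos.
  have [h1 h2] : SSIAMX P X' n.
    apply: SSX' => l l3 ln.
    have -> : [set w | (maxabsX X' l.-1 w < X' l w)%R] =
              [set w | (X l w < - maxabsX X l.-1 w)%R].
      have eqm : forall w, maxabsX X' l.-1 w = maxabsX X l.-1 w.
        move=> w; apply: maxX_ext; first by lia.
        by move=> i _; rewrite normrN.
      by apply/seteqP; split => w /=; rewrite eqm ltrNr.
    exact: hpos.
  split; first by rewrite (mn 2%N isT) -e1.
  move=> l l3 ln; rewrite (mn l) ?(mn l.-1); [exact: h2| lia| lia].
Qed.
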